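(* Let $n,d,c,\sigma\ge1$ be integers, $p$ a prime, and $x,y\in\{0,\ldots,c\}^n$ each having at most $\sigma$ nonzero coordinates. Let $\rho:\{1,\ldots,n\}\to\{1,\ldots,d\}$ be a uniformly random mapping and $r_1,\ldots,r_n$ independent uniform elements of $\{0,\ldots,p-1\}$, define $\phi_j(z)=\big(\sum_{i:\rho(i)=j}z_ir_i\big)\bmod p$, let $f=|\{j:\phi_j(x)\neq\phi_j(y)\}|$ and $f^*=\mathbb{E}[f]$. Then for every $\alpha>0$, $$\Pr\big[|f-f^*|\ge\alpha\big]\le 2\exp\Big(-\frac{\alpha^2}{4\sigma}\Big).$$
   Context: FSketch construction as described in the claim; the sketches of $x$ and $y$ use the same $\rho$ and $r_1,\ldots,r_n$. *)

(* Defs.v *)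
From HB Require Import structures.
From mathcomp Require Import all_boot all_order all_algebra.
From mathcomp Require Import reals.
From mathcomp Require Import sequences.
From mathcomp.analysis Require Import exp.
Set Implicit Arguments. Unset Strict Implicit. Unset Printing Implicit Defensive.
Import Order.TTheory GRing.Theory Num.Theory.
Local Open Scope ring_scope.

(* Sample space of the FSketch randomness: a mapping rho : [n] -> [d]
   (coordinates and buckets are 0-indexed) and values r_1..r_n in {0..p-1}. *)
Definition fs_space (n d p : nat) : finType :=
  ({ffun 'I_n -> 'I_d} * {ffun 'I_n -> 'I_p})%type.

Definition fs_phi (n d p : nat) (rho : {ffun 'I_n -> 'I_d})
  (r : {ffun 'I_n -> 'I_p}) (z : 'I_n -> nat) (j : 'I_d) : nat :=
  ((\sum_(i < n | rho i == j) z i * r i) %% p)%N.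

Definition fs_f (n d p : nat) (x y : 'I_n -> nat) (w : fs_space n d p) : nat :=
  #|[set j : 'I_d | fs_phi w.1 w.2 x j != fs_phi w.1 w.2 y j]|.

Definition unif_prob (R : realType) (T : finType) (E : pred T) : R :=
  #|[set w : T | E w]|%:R / #|T|%:R.

Definition unif_expect (R : realType) (T : finType) (X : T -> R) : R :=
  (\sum_(w : T) X w) / #|T|%:R.

Definition support_size (n : nat) (z : 'I_n -> nat) : nat :=
  #|[set i : 'I_n | z i != 0%N]|.

(* Main.v *)
Require Import Defs.
From HB Require Import structures.
From mathcomp Require Import all_boot all_order all_algebra.
From mathcomp Require Import boolp classical_sets functions reals topology normedtype sequences derive realfun.
From mathcomp.analysis Require Import exp.
From mathcomp Require Import ring lra.
Set Implicit Arguments. Unset Strict Implicit. Unset Printing Implicit Defensive.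
Import Order.TTheory GRing.Theory Num.Theory.
Import numFieldNormedType.Exports.
Local Open Scope ring_scope.

Section Core.
Variable R : realType.

Lemma scR (a b : R) : a *: b = a * b. Proof. by []. Qed.
Lemma algR (a : R) : a%:A = a. Proof. by rewrite /GRing.scale /= mulr1. Qed.

Lemma mvt_all (f df : R -> R) (a b : R) : a <= b ->
  (forall x : R, is_derive x (1:R) f (df x)) ->
  exists2 c, a <= c <= b & f b - f a = df c * (b - a).
Proof.
move=> ab fd.
have [|c cab ->] := MVT_segment ab (fun x _ => fd x).
  apply/continuous_subspaceT=> r.
  have := fd r => -[/derivable1_diffP ? _].
  exact/differentiable_continuous.
by exists c => //; move: cab; rewrite in_itv.
Qed.

Lemma hoeff_core (t h : R) : 0 <= t <= 1 ->
  1 - t + t * expR h <= expR (t * h + h ^+ 2 / 8).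
Proof.
move=> /andP[t0 t1].
pose D x := 1 - t + t * expR x.
have Dpos x : 0 < D x.
  rewrite /D; have := expR_gt0 x; nra.
have dD x : is_derive x (1:R) D (t * expR x).
  have -> : D = cst (1 - t) + t \*: expR by apply/funext=> y.
  by apply: is_derive_eq; rewrite add0r.
pose ps x := t + x / 4 - t * expR x / D x.
pose ps' x := 1/4 - t * (1 - t) * expR x / (D x) ^+ 2.
pose ph x := t * x + x ^+ 2 / 8 - ln (D x).
have dps x : is_derive x (1:R) ps (ps' x).
  have -> : ps = cst t + ( 4^-1 \*: id) - t \*: (expR * (fun y => (D y)^-1)).
    apply/funext=> y; rewrite /ps !fctE /=; congr (_ + _ - _); [exact: mulrC | exact: esym (mulrA _ _ _)].
  have Dn0 : D x != 0 by rewrite gt_eqF.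
  have H := is_deriveB (is_deriveD (is_derive_cst t x 1) (is_deriveZ 4^-1 (is_derive_id x 1)))
     (is_deriveZ t (is_deriveM (is_derive_expR x) (is_deriveV Dn0 (dD x)))).
  by apply: (is_derive_eq H); rewrite !scR ?algR /ps' /= /D; field; move: Dn0.
have dph x : is_derive x (1:R) ph (ps x).
  have -> : ph = t \*: id + (8^-1 \*: (id ^+ 2)) - (@ln R \o D).
    apply/funext=> y; rewrite /ph !fctE /= !scR; ring.
  have H := is_deriveB (is_deriveD (is_deriveZ t (is_derive_id x 1)) (is_deriveZ 8^-1 (is_deriveX 2 (is_derive_id x 1))))
     (is_derive1_comp (is_derive1_ln (Dpos x)) (dD x)).
  apply: (is_derive_eq H); rewrite !scR ?algR /ps /= expr1; field.
  by rewrite gt_eqF.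
have ps0 : ps 0 = 0.
  by rewrite /ps /D expR0 mulr1 subrK; field.
have ph0 : ph 0 = 0.
  by rewrite /ph /D expR0 mulr1 subrK ln1 mulr0 expr0n /= mul0r subr0 addr0.
have ps'ge0 x : 0 <= ps' x.
  have -> : ps' x = (1 - t - t * expR x) ^+ 2 / (4 * (D x) ^+ 2).
    rewrite /ps' /D; field; rewrite -/(D x) gt_eqF //.
  by rewrite divr_ge0 ?sqr_ge0 // mulr_ge0 // sqr_ge0.
have phge0 : 0 <= ph h.
  have [h0|h0] := leP 0 h.
    have [c /andP[c0 ch] E1] := mvt_all h0 dph.
    have [c' /andP[c'0 c'h] E2] := mvt_all c0 dps.
    move: E1 E2; rewrite ph0 ps0 !subr0 => -> E2.
    by rewrite mulr_ge0 // E2 mulr_ge0.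
  have [c /andP[c0 ch] E1] := mvt_all (ltW h0) dph.
  have [c' /andP[c'0 c'h] E2] := mvt_all ch dps.
  move: E1 E2; rewrite ph0 ps0 !sub0r => E1 E2.
  have : ps c <= 0.
    rewrite -oppr_ge0 E2 mulr_ge0 // oppr_ge0 //.
  have : 0 < - h by rewrite oppr_gt0.
  nra.
have lnle : ln (D h) <= t * h + h ^+ 2 / 8 by move: phge0; rewrite /ph subr_ge0.
rewrite -[X in X <= _]/(D h) -[D h]lnK ?ler_expR //.
by rewrite posrE.
Qed.

Section Avg.
Variable T : finType.
Local Notation E := (@unif_expect R T).

Lemma E_ler (f g : T -> R) : (forall t, f t <= g t) -> E f <= E g.
Proof.
move=> fg; rewrite /unif_expect ler_wpM2r // ?invr_ge0 ?ler0n //.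
by apply: ler_sum => t _; exact: fg.
Qed.

Lemma E_scale (k : R) (f : T -> R) : E (fun t => k * f t) = k * E f.
Proof. by rewrite /unif_expect -mulr_sumr mulrA. Qed.

Lemma E_add (f g : T -> R) : E (fun t => f t + g t) = E f + E g.
Proof. by rewrite /unif_expect big_split mulrDl. Qed.

Lemma E_cst (k : R) : (0 < #|T|)%N -> E (fun _ => k) = k.
Proof.
move=> T0; rewrite /unif_expect sumr_const; change (k *+ #|T| / #|T|%:R = k); rewrite -[k *+ _]mulr_natr mulfK //.
by rewrite pnatr_eq0 -lt0n.
Qed.

Lemma E_bounds (f : T -> R) (a b : R) : (0 < #|T|)%N -> (forall t, a <= f t <= b) ->
  a <= E f <= b.
Proof.
move=> T0 fab; apply/andP; split; [rewrite -{1}(E_cst a T0) | rewrite -(E_cst b T0)];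
  by apply: E_ler => t; case/andP: (fab t).
Qed.
End Avg.

Lemma chord (p q u v : R) : 0 <= p -> 0 <= q -> 0 < p + q ->
  expR ((p * u + q * v) / (p + q)) <= (p * expR u + q * expR v) / (p + q).
Proof.
move=> p0 q0 pq0; set w := (p * u + q * v) / (p + q).
have eu : expR w * (1 + (u - w)) <= expR u.
  have -> : expR u = expR w * expR (u - w) by rewrite -expRD addrC subrK.
  by rewrite ler_wpM2l ?expR_ge0 ?expR_ge1Dx.
have ev : expR w * (1 + (v - w)) <= expR v.
  have -> : expR v = expR w * expR (v - w) by rewrite -expRD addrC subrK.
  by rewrite ler_wpM2l ?expR_ge0 ?expR_ge1Dx.
rewrite ler_pdivlMr //.
have -> : expR w * (p + q) = p * (expR w * (1 + (u - w))) + q * (expR w * (1 + (v - w))).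
  rewrite /w; field; exact: lt0r_neq0.
by rewrite lerD // ler_wpM2l.
Qed.

Lemma hoeff_fin (T : finType) (X : T -> R) (a c lam : R) :
  (0 < #|T|)%N -> 0 <= c -> (forall t, a <= X t <= a + c) ->
  unif_expect (fun t => expR (lam * (X t - unif_expect X))) <= expR (lam ^+ 2 * c ^+ 2 / 8).
Proof.
move=> T0 c0 hX; set mu := unif_expect X.
have /andP[amu muc] : a <= mu <= a + c by exact: E_bounds.
have [ce|cpos] := eqVneq c 0.
  subst c; have Xa t : X t = a by have := hX t; rewrite addr0 -eq_le => /eqP.
  have mua : mu = a by rewrite /mu (_ : X = fun _ => a) ?E_cst //; apply/funext.
  rewrite (_ : (fun t => _) = fun _ => 1) ?E_cst //.
    by rewrite expr0n /= mulr0 mul0r expR0.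
  by apply/funext => t; rewrite Xa mua subrr mulr0 expR0.
have cgt0 : 0 < c by rewrite lt_def cpos.
pose u := lam * (a - mu); pose v := lam * (a + c - mu).
have pw t : expR (lam * (X t - mu)) <=
    ((a + c - X t) * expR u + (X t - a) * expR v) / c.
  have [h1 h2] := andP (hX t).
  have := @chord (a + c - X t) (X t - a) u v.
  rewrite subr_ge0 h2 subr_ge0 h1 (_ : a + c - X t + (X t - a) = c); last by ring.
  move=> /(_ isT isT cgt0); apply: le_trans; rewrite le_eqVlt; apply/orP; left.
  apply/eqP; congr expR; rewrite /u /v; field; exact: lt0r_neq0.
apply: (le_trans (E_ler pw)).
have -> : unif_expect (fun t => ((a + c - X t) * expR u + (X t - a) * expR v) / c) =
    ((a + c - mu) * expR u + (mu - a) * expR v) / c.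
  rewrite (_ : (fun t => _) = fun t => (c^-1 * (expR v - expR u)) * X t +
      ((a + c) * expR u - a * expR v) / c); last first.
    by apply/funext => t; field; exact: lt0r_neq0.
  rewrite E_add (E_scale _ X) E_cst // -/mu; field; exact: lt0r_neq0.
pose th := (mu - a) / c.
have th01 : 0 <= th <= 1.
  apply/andP; split; first by rewrite divr_ge0 ?subr_ge0 // ltW.
  by rewrite ler_pdivrMr // mul1r ; move: muc; lra.
have key := hoeff_core (lam * c) th01.
have eu : u = - (th * (lam * c)) by rewrite /u /th; field; exact: lt0r_neq0.
have ev : v = - (th * (lam * c)) + lam * c by rewrite /v /th; field; exact: lt0r_neq0.
rewrite ev expRD -eu.
have -> : ((a + c - mu) * expR u + (mu - a) * (expR u * expR (lam * c))) / c =
    expR u * (1 - th + th * expR (lam * c)).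
  rewrite /th; field; exact: lt0r_neq0.
apply: (le_trans (ler_wpM2l (expR_ge0 _) key)).
rewrite -expRD eu le_eqVlt; apply/orP; left; apply/eqP; congr expR.
ring.
Qed.


Lemma E_sub (T : finType) (f g : T -> R) :
  unif_expect (fun t => f t - g t) = unif_expect f - unif_expect g.
Proof.
rewrite (E_add f (fun t => - g t)); congr (_ + _).
by rewrite -mulN1r -(E_scale (-1) g); congr unif_expect; apply/funext => t; rewrite mulN1r.
Qed.

Lemma hoeff_pair (T : finType) (t0 : T) (X : T -> R) (c lam : R) :
  (forall s t, X s - X t <= c) ->
  unif_expect (fun t => expR (lam * (X t - unif_expect X))) <= expR (lam ^+ 2 * c ^+ 2 / 8).
Proof.
move=> hX.
have [t1 _ hmin] := @arg_minP _ R T t0 predT X isT.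
apply: (@hoeff_fin T X (X t1)).
- by apply/card_gt0P; exists t0.
- by have := hX t0 t0; rewrite subrr.
- move=> t; rewrite hmin //=; have := hX t t1; lra.
Qed.

Section McD.
Variables (Om A I : finType) (get : Om -> I -> A) (upd : Om -> I -> A -> Om).
Hypothesis getU : forall w i a, get (upd w i a) i = a.
Hypothesis getUo : forall w i j a, j != i -> get (upd w i a) j = get w j.
Hypothesis updget : forall w i, upd w i (get w i) = w.
Hypothesis updupd : forall w i a b, upd (upd w i a) i b = upd w i b.
Variable w0 : Om.

Local Notation E := (@unif_expect R Om).
Local Notation EA := (@unif_expect R A).

Lemma swap_sum i (f : Om -> R) :
  \sum_(a : A) \sum_(w : Om) f (upd w i a) = #|A|%:R * \sum_(w : Om) f w.
Proof.
rewrite exchange_big pair_big /=.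
pose h (p : Om * A) := (upd p.1 i p.2, get p.1 i).
have hK : involutive h.
  by case=> w a; rewrite /h /= updupd updget getU.
rewrite (reindex_inj (inv_inj hK)) /=.
rewrite (eq_bigr (fun p : Om * A => f p.1)); last first.
  by case=> w a _; rewrite /h /= updupd updget.
rewrite -(pair_big predT predT (fun w (_ : A) => f w)) /=.
rewrite mulr_sumr; apply: eq_bigr => w _.
by rewrite sumr_const mulr_natl.
Qed.

Lemma E_swap i (f : Om -> R) : (0 < #|A|)%N ->
  E f = EA (fun a => E (fun w => f (upd w i a))).
Proof.
move=> A0; rewrite /unif_expect -mulr_suml swap_sum.
have : #|A|%:R != 0 :> R by rewrite pnatr_eq0 -lt0n.
have : #|Om|%:R != 0 :> R.
  by rewrite pnatr_eq0 -lt0n; apply/card_gt0P; exists w0.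
by move=> ? ?; field; apply/andP.
Qed.

Lemma mcd (c : I -> R) (lam : R) : forall k (S : {set I}) (F : Om -> R), #|S| = k ->
  (forall w w', (forall j, j \in S -> get w j = get w' j) -> F w = F w') ->
  (forall i w w', i \in S -> (forall j, j != i -> get w j = get w' j) -> F w - F w' <= c i) ->
  E (fun w => expR (lam * (F w - E F))) <= expR (lam ^+ 2 * (\sum_(i in S) c i ^+ 2) / 8).
Proof.
have Om0 : (0 < #|Om|)%N by apply/card_gt0P; exists w0.
elim=> [|k IH] S F hS dep bd.
  have S0 : S = @finset.set0 I by apply/eqP; rewrite -cards_eq0 hS.
  have Fc w : F w = F w0 by apply: dep => j; rewrite S0 inE.
  rewrite S0 big_set0 mulr0 mul0r expR0.
  rewrite (_ : F = fun _ => F w0); last by apply/funext.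
  by rewrite E_cst // E_cst // subrr mulr0 expR0.
have /card_gt0P[i iS] : (0 < #|S|)%N by rewrite hS.
have A0 : (0 < #|A|)%N by apply/card_gt0P; exists (get w0 i).
set S' := S :\ i.
have hS' : #|S'| = k by move: hS; rewrite (cardsD1 i S) iS => -[].
pose Fa a w := F (upd w i a).
pose G a := E (Fa a).
have dep' a : forall w w', (forall j, j \in S' -> get w j = get w' j) -> Fa a w = Fa a w'.
  move=> w w' h; apply: dep => j jS; have [->|ji] := eqVneq j i; first by rewrite !getU.
  by rewrite !getUo // h // in_setD1 ji jS.
have bd' a : forall j w w', j \in S' -> (forall l, l != j -> get w l = get w' l) ->
    Fa a w - Fa a w' <= c j.
  move=> j w w' jS' h; apply: bd; first by move: jS'; rewrite in_setD1 => /andP[].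
  move=> l lj; have [->|li] := eqVneq l i; first by rewrite !getU.
  by rewrite !getUo // h.
have IHa a := IH S' (Fa a) hS' (dep' a) (bd' a).
have EF : E F = EA G := E_swap i F A0.
set K := expR (lam ^+ 2 * (\sum_(j in S') c j ^+ 2) / 8).
rewrite (E_swap i (fun w => expR (lam * (F w - E F))) A0).
have step : forall a, E (fun w => expR (lam * (F (upd w i a) - E F))) <=
    K * expR (lam * (G a - EA G)).
  move=> a; rewrite (_ : (fun w => _) = fun w => expR (lam * (G a - EA G)) *
     expR (lam * (Fa a w - E (Fa a)))); last first.
    by apply/funext => w; rewrite -expRD EF /Fa /G; congr expR; ring.
  by rewrite E_scale mulrC ler_wpM2r ?expR_ge0.
apply: (le_trans (E_ler step)); rewrite E_scale.
have hG : forall a b, G a - G b <= c i.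
  move=> a b; rewrite /G -E_sub -(E_cst (c i) Om0); apply: E_ler => w.
  by apply: bd => // j ji; rewrite !getUo.
apply: (le_trans (ler_wpM2l (expR_ge0 _) (hoeff_pair (get w0 i) lam hG))).
rewrite /K -expRD (big_setD1 i iS) /=; rewrite le_eqVlt; apply/orP; left; apply/eqP.
congr expR; rewrite -/S'; ring.
Qed.
End McD.

End Core.

Definition fget n d p (w : fs_space n d p) (i : 'I_n) : ('I_d * 'I_p)%type := (w.1 i, w.2 i).
Definition fupd n d p (w : fs_space n d p) (i : 'I_n) (a : ('I_d * 'I_p)%type) : fs_space n d p :=
  ([ffun j => if j == i then a.1 else w.1 j], [ffun j => if j == i then a.2 else w.2 j]).

Section Fs.
Variables n d p : nat.
Implicit Types w : fs_space n d p.

Lemma fgetU w i a : fget (fupd w i a) i = a.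
Proof. by rewrite /fget /fupd /= !ffunE eqxx; case: a. Qed.

Lemma fgetUo w i j a : j != i -> fget (fupd w i a) j = fget w j.
Proof. by move=> ji; rewrite /fget /fupd /= !ffunE (negbTE ji). Qed.

Lemma fupdget w i : fupd w i (fget w i) = w.
Proof.
case: w => w1 w2; rewrite /fupd /fget /=; congr pair; apply/ffunP => j;
  by rewrite ffunE; case: eqP => // ->.
Qed.

Lemma fupdupd w i a b : fupd (fupd w i a) i b = fupd w i b.
Proof.
by rewrite /fupd /=; congr pair; apply/ffunP => j; rewrite !ffunE; case: (j == i).
Qed.

Lemma phi_eq w w' (z : 'I_n -> nat) j :
  (forall i, z i != 0%N -> fget w i = fget w' i) ->
  fs_phi w.1 w.2 z j = fs_phi w'.1 w'.2 z j.
Proof.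
move=> h; rewrite /fs_phi; congr (_ %% _)%N.
rewrite (big_mkcond (fun i => w.1 i == j)) (big_mkcond (fun i => w'.1 i == j)) /=.
apply: eq_bigr => i _; have [->|nz] := eqVneq (z i) 0%N; first by rewrite !mul0n !if_same.
by case: (h i nz) => -> ->.
Qed.

Lemma phi_eq2 w w' (z : 'I_n -> nat) i j :
  (forall k, k != i -> fget w k = fget w' k) -> w.1 i != j -> w'.1 i != j ->
  fs_phi w.1 w.2 z j = fs_phi w'.1 w'.2 z j.
Proof.
move=> h h1 h2; rewrite /fs_phi; congr (_ %% _)%N.
rewrite (big_mkcond (fun k => w.1 k == j)) (big_mkcond (fun k => w'.1 k == j)) /=.
apply: eq_bigr => k _; have [->|ki] := eqVneq k i; first by rewrite (negbTE h1) (negbTE h2).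
by case: (h k ki) => -> ->.
Qed.
End Fs.

Lemma prob_E (R : realType) (T : finType) (P : pred T) :
  unif_prob R P = unif_expect (fun t => (P t)%:R).
Proof.
rewrite /unif_prob /unif_expect; congr (_ / _).
rewrite -sum1_card natr_sum big_mkcond /=; apply: eq_bigr => t _.
by rewrite inE; case: (P t).
Qed.

Unset Implicit Arguments.
Theorem lemma3 (R : realType) (n d c sigma p : nat)
  (hn : (1 <= n)%N) (hd : (1 <= d)%N) (hc : (1 <= c)%N) (hsigma : (1 <= sigma)%N)
  (hp : prime p)
  (x y : 'I_n -> nat)
  (hx : forall i, (x i <= c)%N) (hy : forall i, (y i <= c)%N)
  (hxs : (support_size x <= sigma)%N) (hys : (support_size y <= sigma)%N)
  (alpha : R) (halpha : 0 < alpha) :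
  let fstar : R :=
    @unif_expect R _ (fun w : fs_space n d p => (fs_f x y w)%:R) in
  @unif_prob R _ (fun w : fs_space n d p => alpha <= `|(fs_f x y w)%:R - fstar|)
  <= 2 * expR (- (alpha ^+ 2 / (4 * sigma%:R))).
Proof.
cbv zeta.
set fstar := unif_expect (fun w : fs_space n d p => _).
pose w0 : fs_space n d p := ([ffun => Ordinal hd], [ffun => Ordinal (prime_gt0 hp)]).
pose F := fun w : fs_space n d p => (fs_f x y w)%:R : R.
pose S := [set i | (x i != 0%N) || (y i != 0%N)].
have hS : (#|S| <= 2 * sigma)%N.
  have -> : S = [set i | x i != 0%N] :|: [set i | y i != 0%N].
    by apply/setP => i; rewrite !inE.
  rewrite cardsU; apply: leq_trans (leq_subr _ _) _.
  by rewrite mul2n -addnn leq_add.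
have dep : forall w w', (forall j, j \in S -> fget w j = fget w' j) -> F w = F w'.
  move=> w w' h; rewrite /F /fs_f; congr (_%:R); apply: eq_card => j.
  rewrite !inE (@phi_eq _ _ _ w w' x) ?(@phi_eq _ _ _ w w' y) // => i nz;
    by apply: h; rewrite inE nz ?orbT.
have bd : forall i w w', i \in S -> (forall j, j != i -> fget w j = fget w' j) ->
    F w - F w' <= 2.
  move=> i w w' _ h.
  have sub : [set j | fs_phi w.1 w.2 x j != fs_phi w.1 w.2 y j] \subset
      [set j | fs_phi w'.1 w'.2 x j != fs_phi w'.1 w'.2 y j] :|: [set w.1 i; w'.1 i].
    apply/fintype.subsetP => j; rewrite !inE.
    have [e1|n1] := eqVneq (w.1 i) j; first by rewrite -e1 ?eqxx /= orbT.
    have [e2|n2] := eqVneq (w'.1 i) j; first by rewrite -e2 ?eqxx /= !orbT.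
    by rewrite (phi_eq2 x h n1 n2) (phi_eq2 y h n1 n2) => ->.
  have := subset_leq_card sub; rewrite cardsU => h1.
  have h2 : (fs_f x y w <= fs_f x y w' + 2)%N.
    apply: (leq_trans h1); apply: (leq_trans (leq_subr _ _)).
    by rewrite leq_add2l cards2; case: (_ != _).
  have : (F w <= F w' + 2).
    by rewrite /F -[2]/(2%:R : R) -natrD ler_nat.
  lra.
pose beta := alpha / (2 * sigma%:R).
have sig0 : 0 < sigma%:R :> R by rewrite ltr0n.
have beta0 : 0 < beta by rewrite divr_gt0 // mulr_gt0.
have M : forall lam, unif_expect (fun w => expR (lam * (F w - fstar))) <=
    expR (lam ^+ 2 * sigma%:R).
  move=> lam.
  have := @mcd R _ _ _ _ _ (@fgetU n d p) (@fgetUo n d p) (@fupdget n d p) (@fupdupd n d p)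
     w0 (fun _ => 2) lam #|S| S F erefl dep bd.
  move=> /le_trans; apply; rewrite ler_expR.
  have hSR : (#|S|%:R : R) <= 2 * sigma%:R by rewrite -natrM ler_nat.
  have hsum : (\sum_(i in S) (2:R) ^+ 2) / 8 <= sigma%:R.
    rewrite sumr_const ler_pdivrMr // -[_ *+ #|S|]mulr_natr.
    move: hSR; rewrite expr2; lra.
  by rewrite -mulrA ler_wpM2l ?sqr_ge0.
rewrite prob_E.
have pw : forall w, (((alpha <= `|F w - fstar|)%R : nat)%:R : R) <=
    expR (- (beta * alpha)) * expR (beta * (F w - fstar)) +
    expR (- (beta * alpha)) * expR ((- beta) * (F w - fstar)).
  move=> w; rewrite -!expRD.
  have e1 := expR_ge0 (- (beta * alpha) + beta * (F w - fstar)).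
  have e2 := expR_ge0 (- (beta * alpha) + - beta * (F w - fstar)).
  case: (boolP (alpha <= _)) => [ha|_]; last by rewrite /= addr_ge0.
  rewrite /=.
  have [pos|neg] := leP 0 (F w - fstar).
    move: ha; rewrite ger0_norm // => ha.
    have h0 : 0 <= - (beta * alpha) + beta * (F w - fstar).
      by rewrite addrC subr_ge0 ler_wpM2l // ltW.
    have : 1 <= expR (- (beta * alpha) + beta * (F w - fstar)).
      by apply: le_trans (expR_ge1Dx _); rewrite lerDl.
    lra.
  move: ha; rewrite ltr0_norm // => ha.
  have : 1 <= expR (- (beta * alpha) + - beta * (F w - fstar)).
    apply: le_trans (expR_ge1Dx _); rewrite lerDl addrC mulNr -mulrN subr_ge0.
    by rewrite ler_wpM2l // ltW.
  lra.
apply: (le_trans (E_ler pw)); rewrite E_add !E_scale.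
have := M beta; have := M (- beta).
rewrite sqrrN => hm1 hm2.
apply: (@le_trans _ _ (expR (- (beta * alpha)) * expR (beta ^+ 2 * sigma%:R) +
   expR (- (beta * alpha)) * expR (beta ^+ 2 * sigma%:R))).
  by rewrite lerD // ler_wpM2l ?expR_ge0.
rewrite -expRD -mulr2n -(mulr_natl (expR _) 2) ler_wpM2l //.
rewrite le_eqVlt; apply/orP; left; apply/eqP; congr expR.
rewrite /beta; field; rewrite gt_eqF //.
Qed.
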